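(* Let $M$ be a finite-dimensional complex representation of a finite quiver $Q$ with ordered basis $\mathcal B$, $\underline e$ a dimension vector and $\beta\subseteq\mathcal B$ of type $\underline e$. If $\beta$ is not extremal successor closed, then the Schubert cell $C_\beta^M$ is empty.
   Context: $\mathcal B=\bigcup_p\mathcal B_p$ is a union of bases of the $M_p$, linearly ordered. $\beta$ is of type $\underline e$ if $|\beta\cap\mathcal B_p|=e_p$ for all $p$. $\mathrm{Gr}_{\underline e}(M)$ is the variety of subrepresentations of dimension vector $\underline e$. For $e$-subsets $I=\{i_1<\dots<i_e\}$, $J=\{j_1<\dots<j_e\}$, $I\le J$ means $i_l\le j_l$ for all $l$. $C_\beta^M$ is the set of $N\in\mathrm{Gr}_{\underline e}(M)$ such that for each $p$ the Plücker coordinates w.r.t. $\mathcal B_p$ satisfy $\Delta_{\beta_p}(N_p)\ne0$ and $\Delta_J(N_p)=0$ for all $J>\beta_p$, where $\beta_p=\beta\cap\mathcal B_p$. Coefficient quiver $T=\Gamma(M,\mathcal B)$: vertices $T_0=\mathcal B$; for $\bar\alpha\in Q_1$, $b\in\mathcal B_{s(\bar\alpha)}$, $c\in\mathcal B_{t(\bar\alpha)}$ there is an arrow $b\to c$ (of colour $\bar\alpha$) iff the coefficient of $c$ in $M_{\bar\alpha}(b)$ is nonzero; $F:T\to Q$ maps $b\in\mathcal B_p$ to $p$ and an arrow of colour $\bar\alpha$ to $\bar\alpha$. An arrow $\alpha:s\to t$ of $T$ is extremal if every other arrow $\alpha':s'\to t'$ of $T$ with $F(\alpha')=F(\alpha)$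 satisfies $s<s'$ or $t'<t$. A subset $\beta\subseteq T_0$ is extremal successor closed if for every extremal arrow $\alpha:s\to t$ of $T$, either $s\notin\beta$ or $t\in\beta$. *)

(* Defs.v *)
From HB Require Import structures.
From mathcomp Require Import all_boot all_order all_algebra.
Set Implicit Arguments. Unset Strict Implicit. Unset Printing Implicit Defensive.
Import GRing.Theory Num.Theory.
Local Open Scope ring_scope.

(* A finite quiver Q = (V, A, src, tgt); a representation M over a field K
   with M_p = K^(d p) (row vectors) and M_alpha : K^(d (src a)) -> K^(d (tgt a))
   given by right multiplication  x |-> x *m Mat a.
   The basis B_p is the standard basis of K^(d p); the total basis
   B = union of the B_p is the finite type  {p : V & 'I_(d p)}, linearly
   ordered by an injective rank function  rk : B -> nat. *)

Definition bvertices (V : finType) (d : V -> nat) : finType := {p : V & 'I_(d p)}.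

Definition bvec (V : finType) (d : V -> nat) (p : V) (i : 'I_(d p)) : bvertices d :=
  Tagged (fun q => 'I_(d q)) i.

Definition beta_at (V : finType) (d : V -> nat) (beta : {set bvertices d}) (p : V)
  : {set 'I_(d p)} := [set i | bvec i \in beta].

Definition of_type (V : finType) (d : V -> nat) (e : V -> nat)
  (beta : {set bvertices d}) : Prop :=
  forall p, #|beta_at beta p| = e p.

(* Plucker coordinate Delta_J(X) of the row space of X : 'M_(r, n)
   (rows of X form a basis), J an r-subset of column indices:
   the r x r minor of X on the columns J (0 if #|J| <> r). *)
Definition plucker (K : fieldType) (r n : nat) (X : 'M[K]_(r, n))
  (J : {set 'I_n}) : K :=
  match #|J| =P r with
  | ReflectT E =>
      \det (colsub (fun i : 'I_r => @enum_val _ (mem J) (cast_ord (esym E) i)) X)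
  | ReflectF _ => 0
  end.

Definition sorted_by (n : nat) (rk : 'I_n -> nat) (I : {set 'I_n}) : seq 'I_n :=
  sort (fun a b => rk a <= rk b)%N (enum I).

Definition subset_le (n : nat) (rk : 'I_n -> nat) (I J : {set 'I_n}) : bool :=
  (#|I| == #|J|) &&
  all2 (fun a b => rk a <= rk b)%N (sorted_by rk I) (sorted_by rk J).

Definition subset_lt (n : nat) (rk : 'I_n -> nat) (I J : {set 'I_n}) : bool :=
  subset_le rk I J && (I != J).

(* Subrepresentations of dimension vector e: N_p is the row space of the
   square matrix N p. *)
Definition in_Gr (K : fieldType) (V A : finType) (src tgt : A -> V)
  (d : V -> nat) (Mat : forall a : A, 'M[K]_(d (src a), d (tgt a)))
  (e : V -> nat) (N : forall p : V, 'M[K]_(d p)) : Prop :=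
  (forall a : A, (N (src a) *m Mat a <= N (tgt a))%MS) /\
  (forall p : V, \rank (N p) = e p).

Definition in_cell (K : fieldType) (V A : finType) (src tgt : A -> V)
  (d : V -> nat) (Mat : forall a : A, 'M[K]_(d (src a), d (tgt a)))
  (rk : bvertices d -> nat) (e : V -> nat) (beta : {set bvertices d})
  (N : forall p : V, 'M[K]_(d p)) : Prop :=
  in_Gr Mat e N /\
  forall p : V,
    plucker (row_base (N p)) (beta_at beta p) != 0 /\
    forall J : {set 'I_(d p)},
      #|J| = e p ->
      subset_lt (fun i => rk (bvec i)) (beta_at beta p) J ->
      plucker (row_base (N p)) J = 0.

(* Coefficient quiver: an arrow (bvec i) -> (bvec j) of colour a iff the
   coefficient of the j-th basis vector of M_(tgt a) in M_a(i-th basis vector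
   of M_(src a)) is nonzero, i.e. Mat a i j != 0. *)
Definition cq_arrow (K : fieldType) (V A : finType) (src tgt : A -> V)
  (d : V -> nat) (Mat : forall a : A, 'M[K]_(d (src a), d (tgt a)))
  (a : A) (i : 'I_(d (src a))) (j : 'I_(d (tgt a))) : bool :=
  Mat a i j != 0.
Arguments cq_arrow {K V A src tgt d} Mat a i j.

Definition extremal (K : fieldType) (V A : finType) (src tgt : A -> V)
  (d : V -> nat) (Mat : forall a : A, 'M[K]_(d (src a), d (tgt a)))
  (rk : bvertices d -> nat)
  (a : A) (i : 'I_(d (src a))) (j : 'I_(d (tgt a))) : Prop :=
  cq_arrow Mat a i j /\
  forall (i' : 'I_(d (src a))) (j' : 'I_(d (tgt a))),
    cq_arrow Mat a i' j' -> (i', j') <> (i, j) ->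
    (rk (bvec i) < rk (bvec i'))%N \/ (rk (bvec j') < rk (bvec j))%N.
Arguments extremal {K V A src tgt d} Mat rk a i j.

Definition ext_succ_closed (K : fieldType) (V A : finType) (src tgt : A -> V)
  (d : V -> nat) (Mat : forall a : A, 'M[K]_(d (src a), d (tgt a)))
  (rk : bvertices d -> nat) (beta : {set bvertices d}) : Prop :=
  forall (a : A) (i : 'I_(d (src a))) (j : 'I_(d (tgt a))),
    extremal Mat rk a i j -> bvec i \notin beta \/ bvec j \in beta.

(* Main.v *)
Require Import Defs.
From HB Require Import structures.
From mathcomp Require Import all_boot all_order all_algebra.
From mathcomp Require Import fingroup perm zify.
Set Implicit Arguments. Unset Strict Implicit. Unset Printing Implicit Defensive.
Import GRing.Theory Num.Theory.
Local Open Scope ring_scope.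



Lemma det_colsub_perm (K : fieldType) (r n : nat) (X : 'M[K]_(r, n))
  (g : 'I_r -> 'I_n) (s : 'S_r) :
  (\det (colsub (g \o s) X) == 0) = (\det (colsub g X) == 0).
Proof.
rewrite colsub_comp -col_permEsub col_permE det_mulmx det_perm.
by rewrite mulf_eq0 signr_eq0 orbF.
Qed.

Lemma plucker_inj (K : fieldType) (r n : nat) (X : 'M[K]_(r, n))
  (J : {set 'I_n}) (h : 'I_r -> 'I_n) :
  #|J| = r -> injective h -> (forall i, h i \in J) ->
  (plucker X J == 0) = (\det (colsub h X) == 0).
Proof.
move=> cJ hinj hJ; rewrite /plucker.
case: (#|J| =P r) => [E|//].
pose g := fun i : 'I_r => @enum_val _ (mem J) (cast_ord (esym E) i).
pose s0 := fun i => cast_ord E (enum_rank_in (hJ i) (h i)).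
have gs : forall i, g (s0 i) = h i.
  by move=> i; rewrite /g /s0 cast_ordK enum_rankK_in.
have s0inj : injective s0.
  by move=> i j eij; apply: hinj; rewrite -!gs eij.
have -> : colsub h X = colsub (g \o perm s0inj) X.
  by apply: eq_colsub => i /=; rewrite permE gs.
by rewrite det_colsub_perm.
Qed.



Lemma det_swap (K : fieldType) (r n : nat) (Y : 'M[K]_(r, n))
  (fB : 'I_r -> 'I_n) (ib : 'I_r) (t : 'I_n) :
  colsub fB Y = 1%:M ->
  \det (colsub (fun i => if i == ib then t else fB i) Y) = Y ib t.
Proof.
move=> hY.
have hY' : forall i k, Y i (fB k) = (i == k)%:R.
  by move=> i k; have := congr1 (fun M : 'M[K]_r => M i k) hY; rewrite !mxE.
set M := colsub _ Y.
rewrite (expand_det_col M ib) (bigD1 ib) //= big1 ?addr0.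
  rewrite /cofactor addnn -muln2 exprM sqrr_sign mul1r.
  rewrite /M mxE eqxx.
  have -> : row' ib (col' ib (colsub (fun i => if i == ib then t else fB i) Y)) = 1%:M.
    apply/matrixP => x y; rewrite !mxE.
    by rewrite eq_sym (negbTE (neq_lift ib y)) hY' (inj_eq (@lift_inj _ ib)).
  by rewrite det1 mulr1.
move=> i nib; rewrite /cofactor.
have [x0 Ex0 _] := unlift_some nib.
rewrite (expand_det_row _ x0) big1 ?mulr0 //.
move=> y _; rewrite !mxE -Ex0 eq_sym (negbTE (neq_lift ib y)) hY'.
by rewrite (negbTE (neq_lift ib y)) mul0r.
Qed.

Local Close Scope ring_scope.

Lemma gale_count (T : eqType) (R : T -> nat) (x0 : T) (u v : seq T) :
  sorted (fun a b => R a <= R b) u -> sorted (fun a b => R a <= R b) v ->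
  size u = size v ->
  (forall k, count (fun x => k <= R x) u <= count (fun x => k <= R x) v) ->
  all2 (fun a b => R a <= R b) u v.
Proof.
move=> su sv euv hc.
have tr : transitive (fun a b => R a <= R b) by move=> a b c /= h1 h2; exact: leq_trans h1 h2.
have rf : reflexive (fun a b => R a <= R b) by move=> a /=.
rewrite all2E euv eqxx /=; apply/(all_nthP (x0, x0)) => m.
rewrite size_zip -euv minnn => hm; rewrite nth_zip //=.
rewrite leqNgt; apply/negP => lt.
set k := R (nth x0 u m).
pose p := fun x => k <= R x.
have h1 : size u - m <= count p u.
  rewrite -(cat_take_drop m u) count_cat size_cat size_take size_drop hm /=.
  have : all p (drop m u).
    apply/(all_nthP x0) => i; rewrite size_drop => hi; rewrite nth_drop /p.
    by apply: (sorted_leq_nth tr rf x0 su); rewrite ?inE /=; lia.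
  rewrite all_count size_drop => /eqP ->. lia.
have h2 : count p v <= size v - m.+1.
  rewrite -(cat_take_drop m.+1 v) count_cat size_cat size_take size_drop.
  have : ~~ has p (take m.+1 v).
    apply/hasPn => x /(nthP x0) [i]; rewrite size_take => hi <-.
    have hi' : i < m.+1 by move: hi; case: ifP => hh; lia.
    rewrite nth_take //.
    rewrite /p -ltnNge; apply: leq_ltn_trans lt.
    by apply: (sorted_leq_nth tr rf x0 sv); rewrite ?inE /=; lia.
  rewrite has_count -leqNgt leqn0 => /eqP ->.
  have := count_size p (drop m.+1 v); rewrite size_drop; case: ifP; lia.
have := hc k; rewrite -/p; lia.
Qed.

Lemma count_sorted_by (n : nat) (R : 'I_n -> nat) (I : {set 'I_n}) (p : pred 'I_n) :
  count p (sorted_by R I) = (\sum_(i in I) p i)%N.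
Proof.
have hp : perm_eq (sort (fun a b => R a <= R b) (enum I)) (enum I) by rewrite perm_sort.
rewrite /sorted_by (seq.permP hp) -sum1_count big_enum_cond.
by rewrite big_mkcondr /=; apply: eq_bigr => i _; case: (p i).
Qed.

Lemma gale_swap (n : nat) (R : 'I_n -> nat) (B : {set 'I_n}) (b t : 'I_n) :
  b \in B -> t \notin B -> R b < R t ->
  subset_lt R B (t |: (B :\ b)).
Proof.
move=> bB tB lbt.
have tb : t != b by apply: contraNneq tB => ->.
have cJ : #|t |: (B :\ b)| = #|B|.
  rewrite cardsU1 in_setD1 (negbTE tB) andbF /= (cardsD1 b B) bB.
  by [].
rewrite /subset_lt /subset_le cJ eqxx /=.
apply/andP; split; last first.
  by apply: contraNneq tB => ->; rewrite setU11.
have tot : total (fun a b => R a <= R b) by move=> x y; exact: leq_total.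
apply: (gale_count b); rewrite ?sort_sorted //.
  by rewrite /sorted_by !size_sort -!cardE cJ.
move=> k; rewrite !count_sorted_by.
rewrite (bigD1 b bB) (bigD1 t (setU11 _ _)) /=.
have -> : (\sum_(i in t |: (B :\ b) | i != t) (k <= R i))%N =
          (\sum_(i in B | i != b) (k <= R i))%N.
  apply: eq_bigl => i; rewrite !inE.
  case: (i =P t) => [->|_] /=; first by rewrite (negbTE tB).
  by rewrite andbT andbC.
apply: leq_add; last by [].
case: (leqP k (R b)) => // h.
by rewrite (leq_trans h (ltnW lbt)).
Qed.

Local Open Scope ring_scope.


Lemma card_swap (n : nat) (B : {set 'I_n}) (b t : 'I_n) :
  b \in B -> t \notin B -> #|t |: (B :\ b)| = #|B|.
Proof.
move=> bB tB; rewrite cardsU1 in_setD1 (negbTE tB) andbF /= (cardsD1 b B) bB.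
by [].
Qed.

Lemma normal_form (K : fieldType) (r n : nat) (X : 'M[K]_(r, n))
  (R : 'I_n -> nat) (B : {set 'I_n}) :
  #|B| = r -> plucker X B != 0 ->
  (forall J : {set 'I_n}, #|J| = r -> subset_lt R B J -> plucker X J = 0) ->
  exists (Y : 'M[K]_(r, n)) (fB : 'I_r -> 'I_n),
    [/\ injective fB, (forall i, fB i \in B),
        (forall x, x \in B -> exists i, fB i = x),
        colsub fB Y = 1%:M &
        ((Y :=: X)%MS /\
        (forall ib t, t \notin B -> (R (fB ib) < R t)%N -> Y ib t = 0))].
Proof.
move=> cB hB hJ.
pose fB := fun i : 'I_r => @enum_val _ (mem B) (cast_ord (esym cB) i).
have fBinj : injective fB.
  by move=> i j /enum_val_inj /cast_ord_inj.
have fBB : forall i, fB i \in B by move=> i; exact: enum_valP.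
have fBsurj : forall x, x \in B -> exists i, fB i = x.
  move=> x xB; exists (cast_ord cB (enum_rank_in xB x)).
  by rewrite /fB cast_ordK enum_rankK_in.
pose P := colsub fB X.
have PU : P \in unitmx.
  rewrite unitmxE unitfE -(plucker_inj _ cB fBinj fBB); exact: hB.
pose Y := invmx P *m X.
have hY : colsub fB Y = 1%:M by rewrite -mulmx_colsub mulVmx.
have eYX : (Y :=: X)%MS.
  apply/eqmxP/andP; split; first exact: submxMl.
  by rewrite -{1}(mulKVmx PU X) submxMl.
exists Y, fB; split => //; split => // ib t tB lt.
set h := fun i => if i == ib then t else fB i.
have <- := det_swap ib t hY.
have hinj : injective h.
  move=> i j; rewrite /h; case: (i =P ib) => [->|ni]; case: (j =P ib) => [->|nj] //.
  - by move=> e; move: tB; rewrite e fBB.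
  - by move=> e; move: tB; rewrite -e fBB.
  - exact: fBinj.
have bB := fBB ib.
have hJ' : forall i, h i \in t |: (B :\ fB ib).
  move=> i; rewrite /h; case: (i =P ib) => [_|ni]; first by rewrite setU11.
  by rewrite !inE (inj_eq fBinj) fBB andbT; apply/orP; right; apply/eqP.
have cJ : #|t |: (B :\ fB ib)| = r by rewrite card_swap.
have := hJ _ cJ (gale_swap bB tB lt).
move/eqP; rewrite (plucker_inj _ cJ hinj hJ') => /eqP.
rewrite /Y -mulmx_colsub det_mulmx => ->; exact: mulr0.
Qed.

Lemma lead_in (K : fieldType) (r n : nat) (X : 'M[K]_(r, n))
  (R : 'I_n -> nat) (Rinj : injective R) (B : {set 'I_n}) :
  #|B| = r -> plucker X B != 0 ->
  (forall J : {set 'I_n}, #|J| = r -> subset_lt R B J -> plucker X J = 0) ->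
  forall (w : 'rV[K]_n) (t : 'I_n), (w <= X)%MS -> w 0 t != 0 ->
  (forall c, (R t < R c)%N -> w 0 c = 0) -> t \in B.
Proof.
move=> cB hB hJ w t wX wt hw.
have [Y [fB [fBinj fBB fBsurj hY [eYX hsw]]]] := normal_form cB hB hJ.
apply/negPn/negP => tB.
have wY : (w <= Y)%MS by rewrite eYX.
move: wt hw; have [y ->] := submxP wY; move=> wt hw.
have hyk : forall k, (y *m Y) 0 (fB k) = y 0 k.
  move=> k; rewrite mxE (bigD1 k) //= big1 ?addr0.
    have := congr1 (fun M : 'M[K]_r => M k k) hY; rewrite !mxE eqxx => ->.
    by rewrite mulr1.
  move=> i ik; have := congr1 (fun M : 'M[K]_r => M i k) hY.
  by rewrite !mxE (negbTE ik) => ->; rewrite mulr0.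
have [ib yib] : exists ib, y 0 ib * Y ib t != 0.
  apply/existsP; apply: contraR wt; rewrite negb_exists => /forallP H.
  rewrite mxE; apply/eqP; apply: big1 => i _; apply/eqP.
  by have := H i; rewrite negbK.
have ltb : (R (fB ib) < R t)%N.
  rewrite ltn_neqAle; apply/andP; split.
    apply/negP => /eqP /Rinj e; move: tB; by rewrite -e fBB.
  rewrite leqNgt; apply/negP => /hw; rewrite hyk => e.
  by move: yib; rewrite e mul0r eqxx.
by move: yib; rewrite (hsw ib t tB ltb) mulr0 eqxx.
Qed.

Lemma lead_exists (K : fieldType) (r n : nat) (X : 'M[K]_(r, n))
  (R : 'I_n -> nat) (Rinj : injective R) (B : {set 'I_n}) :
  #|B| = r -> plucker X B != 0 ->
  (forall J : {set 'I_n}, #|J| = r -> subset_lt R B J -> plucker X J = 0) ->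
  forall s, s \in B -> exists v : 'rV[K]_n,
    [/\ (v <= X)%MS, v 0 s = 1 & (forall c, (R s < R c)%N -> v 0 c = 0)].
Proof.
move=> cB hB hJ s sB.
have [Y [fB [fBinj fBB fBsurj hY [eYX hsw]]]] := normal_form cB hB hJ.
have [ib <-] := fBsurj s sB.
have hY' : forall i k, Y i (fB k) = (i == k)%:R.
  by move=> i k; have := congr1 (fun M : 'M[K]_r => M i k) hY; rewrite !mxE.
exists (row ib Y); split.
- by rewrite -eYX row_sub.
- by rewrite mxE hY' eqxx.
move=> c lc; rewrite mxE.
case cB': (c \in B); last by apply: hsw => //; rewrite cB'.
move: lc; have [k <-] := fBsurj c cB'.
rewrite hY'; case: (ib =P k) => [->|//]; by rewrite ltnn.
Qed.



Theorem lemma3p1 (K : numClosedFieldType) (V A : finType) (src tgt : A -> V)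
  (d : V -> nat) (Mat : forall a : A, 'M[K]_(d (src a), d (tgt a)))
  (rk : bvertices d -> nat) (rk_inj : injective rk)
  (e : V -> nat) (beta : {set bvertices d}) :
  of_type e beta ->
  ~ ext_succ_closed Mat rk beta ->
  ~ (exists N : forall p : V, 'M[K]_(d p), in_cell Mat rk e beta N).
Proof.
move=> Htype Hnc [N [[HGr Hrk] Hcell]].
have Rinj : forall p, injective (fun i : 'I_(d p) => rk (bvec i)).
  by move=> p x y exy; exact: (@eq_from_Tagged _ (fun q => 'I_(d q)) _ _ _ (rk_inj _ _ exy)).
have cB : forall p, #|beta_at beta p| = \rank (N p).
  by move=> p; rewrite Htype Hrk.
have hJ : forall p (J : {set 'I_(d p)}), #|J| = \rank (N p) ->
    subset_lt (fun i => rk (bvec i)) (beta_at beta p) J ->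
    plucker (row_base (N p)) J = 0.
  by move=> p J cJ; apply: (proj2 (Hcell p)); rewrite cJ Hrk.
apply: Hnc => a i j [Harr Hext].
case iB: (bvec i \in beta); last by left; apply/negbT.
case jB: (bvec j \in beta); first by right.
exfalso.
have iB' : i \in beta_at beta (src a) by rewrite inE.
have [v [hvX hvi hv]] := lead_exists (Rinj _) (cB _) (proj1 (Hcell _)) (hJ _) iB'.
set w := v *m Mat a.
have wX : (w <= row_base (N (tgt a)))%MS.
  rewrite eq_row_base; apply: submx_trans (HGr a).
  by apply: submxMr; rewrite -(eq_row_base (N (src a))).
have term : forall k c, (k, c) <> (i, j) ->
    (rk (bvec j) <= rk (bvec c))%N -> v 0 k * Mat a k c = 0.
  move=> k c ne lc.
  have [vk|vk] := eqVneq (v 0 k) 0; first by rewrite vk mul0r.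
  have lk : (rk (bvec k) <= rk (bvec i))%N.
    by rewrite leqNgt; apply/negP => /hv; apply/eqP.
  have [mk|mk] := eqVneq (Mat a k c) 0; first by rewrite mk mulr0.
  by case: (Hext k c mk ne); lia.
have : j \in beta_at beta (tgt a).
  apply: (lead_in (Rinj _) (cB _) (proj1 (Hcell _)) (hJ _) wX).
  - rewrite mxE (bigD1 i) //= big1 ?addr0 ?hvi ?mul1r //.
    move=> k ki; apply: term => //; first by case=> /eqP; rewrite (negbTE ki).
  - move=> c lc; rewrite mxE; apply: big1 => k _; apply: term; last lia.
    by case=> _ ec; move: lc; rewrite ec ltnn.
by rewrite inE jB.
Qed.
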